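(* Let $(X,\rho)$ be a compact metric space with at least two points and let $T\colon X\to X$ be continuous and topologically weakly mixing. There exist numbers $\delta_d\in(0,1)$, $d\ge2$, and a Mycielski set $M\subset X$ such that for every $d\ge2$, all pairwise distinct $x_1,\dots,x_d\in M$ and all integers $s_1,\dots,s_d\ge0$, the $d$-tuple $(T^{s_1}x_1,\dots,T^{s_d}x_d)$ is $\delta_d$-Li-Yorke. Moreover $\omega(x,T)=X$ for every $x\in M$.
   Context: $T$ is topologically weakly mixing if $T\times T$ is topologically transitive. A Mycielski set is a countable union of Cantor sets. A $d$-tuple is $\delta$-Li-Yorke if $\liminf_n\max_{i,j}\rho(T^nx_i,T^nx_j)=0$ and $\limsup_n\min_{i\ne j}\rho(T^nx_i,T^nx_j)>\delta$. $\omega(x,T)$ is the $\omega$-limit set of $x$. *)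

(* Defs.v *)
From Stdlib Require Import Reals.
Open Scope R_scope.

Definition is_metric {X : Type} (rho : X -> X -> R) : Prop :=
  (forall x y, rho x y = 0 <-> x = y) /\
  (forall x y, rho x y = rho y x) /\
  (forall x y z, rho x z <= rho x y + rho y z).

Definition open_set {X : Type} (rho : X -> X -> R) (U : X -> Prop) : Prop :=
  forall x, U x -> exists eps, eps > 0 /\ forall y, rho x y < eps -> U y.

Definition compact_space {X : Type} (rho : X -> X -> R) : Prop :=
  forall (I : Type) (U : I -> X -> Prop),
    (forall i, open_set rho (U i)) ->
    (forall x, exists i, U i x) ->
    exists l : list I, forall x, exists i, List.In i l /\ U i x.

Definition continuous_map {X : Type} (rho : X -> X -> R) (T : X -> X) : Prop :=
  forall x eps, eps > 0 -> exists del, del > 0 /\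
    forall y, rho x y < del -> rho (T x) (T y) < eps.

Definition prod_dist {X : Type} (rho : X -> X -> R) (p q : X * X) : R :=
  Rmax (rho (fst p) (fst q)) (rho (snd p) (snd q)).

Definition prod_map {X : Type} (T : X -> X) (p : X * X) : X * X :=
  (T (fst p), T (snd p)).

Definition top_transitive {Y : Type} (dist : Y -> Y -> R) (S : Y -> Y) : Prop :=
  forall U V : Y -> Prop,
    open_set dist U -> open_set dist V ->
    (exists u, U u) -> (exists v, V v) ->
    exists n : nat, (0 < n)%nat /\ exists u, U u /\ V (Nat.iter n S u).

Definition weakly_mixing {X : Type} (rho : X -> X -> R) (T : X -> X) : Prop :=
  top_transitive (prod_dist rho) (prod_map T).

(* Cantor space {0,1}^N; continuity w.r.t. the product topology *)
Definition cantor_continuous {X : Type} (rho : X -> X -> R)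
  (f : (nat -> bool) -> X) : Prop :=
  forall (a : nat -> bool) eps, eps > 0 -> exists N : nat,
    forall b : nat -> bool, (forall k, (k < N)%nat -> b k = a k) ->
      rho (f a) (f b) < eps.

(* C is a Cantor set: C is the image of a continuous injection of the Cantor
   space {0,1}^N (hence homeomorphic to it, since {0,1}^N is compact and X
   is Hausdorff). *)
Definition cantor_set {X : Type} (rho : X -> X -> R) (C : X -> Prop) : Prop :=
  exists f : (nat -> bool) -> X,
    cantor_continuous rho f /\
    (forall a b, f a = f b -> a = b) /\
    (forall x, C x <-> exists a, f a = x).

Definition mycielski_set {X : Type} (rho : X -> X -> R) (M : X -> Prop) : Prop :=
  exists C : nat -> X -> Prop,
    (forall k, cantor_set rho (C k)) /\
    (forall x, M x <-> exists k, C k x).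

(* the d-tuple (y_0, ..., y_{d-1}) is delta-Li-Yorke:
   liminf_n max_{i,j} rho(T^n y_i, T^n y_j) = 0 and
   limsup_n min_{i<>j} rho(T^n y_i, T^n y_j) > delta *)
Definition li_yorke_tuple {X : Type} (rho : X -> X -> R) (T : X -> X)
  (delta : R) (d : nat) (y : nat -> X) : Prop :=
  (forall eps, eps > 0 -> forall N : nat, exists n, (N <= n)%nat /\
     forall i j, (i < d)%nat -> (j < d)%nat ->
       rho (Nat.iter n T (y i)) (Nat.iter n T (y j)) < eps) /\
  (exists delta', delta' > delta /\ forall N : nat, exists n, (N <= n)%nat /\
     forall i j, (i < d)%nat -> (j < d)%nat -> i <> j ->
       rho (Nat.iter n T (y i)) (Nat.iter n T (y j)) > delta').

Definition in_omega_limit {X : Type} (rho : X -> X -> R) (T : X -> X)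
  (x y : X) : Prop :=
  forall eps, eps > 0 -> forall N : nat, exists n, (N <= n)%nat /\
    rho (Nat.iter n T x) y < eps.

(* Main.v *)
Require Import Defs.
From Stdlib Require Import Reals.
Open Scope R_scope.
From Stdlib Require Import Reals Lra Lia List Classical ClassicalEpsilon FunctionalExtensionality.
From Stdlib Require Import Arith.Cantor ZArith.
Require Import Defs.
Import ListNotations.
Open Scope R_scope.

Definition agree (k : nat) (a b : nat -> bool) := forall i, (i < k)%nat -> a i = b i.
Definition rep (k : nat) (a : nat -> bool) : nat -> bool := fun i => if Nat.ltb i k then a i else false.
Definition upd (w : nat -> bool) (k : nat) (v : bool) : nat -> bool := fun i => if Nat.eqb i k then v else w i.
Fixpoint words (k : nat) : list (nat -> bool) :=
  match k with
  | O => [fun _ => false]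
  | S k => flat_map (fun w => [upd w k false; upd w k true]) (words k)
  end.

Lemma rep_in k a : In (rep k a) (words k).
Proof.
  induction k.
  - simpl. left. apply functional_extensionality. intros i. unfold rep. destruct i; reflexivity.
  - simpl. apply in_flat_map. exists (rep k a). split; auto.
    assert (E : rep (S k) a = upd (rep k a) k (a k)).
    { apply functional_extensionality. intros i. unfold rep, upd.
      destruct (Nat.eqb_spec i k) as [->|H].
      - rewrite (proj2 (Nat.ltb_lt k (S k))) by lia. reflexivity.
      - destruct (Nat.ltb_spec i (S k)); destruct (Nat.ltb_spec i k); try reflexivity; lia. }
    rewrite E. destruct (a k); simpl; auto.
Qed.

Lemma rep_agree k a : agree k a (rep k a).
Proof. intros i Hi. unfold rep. destruct (Nat.ltb_spec i k); [reflexivity | lia]. Qed.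

Lemma agree_sym k a b : agree k a b -> agree k b a.
Proof. intros H i Hi. symmetry. auto. Qed.
Lemma agree_trans k a b c : agree k a b -> agree k b c -> agree k a c.
Proof. intros H1 H2 i Hi. rewrite H1; auto. Qed.
Lemma agree_le k k' a b : (k' <= k)%nat -> agree k a b -> agree k' a b.
Proof. intros H1 H2 i Hi. apply H2. lia. Qed.

Fixpoint bin (a : nat -> bool) (L : nat) : nat :=
  match L with
  | O => O
  | S L => (bin a L + (if a L then 2 ^ L else 0))%nat
  end.

Lemma bin_lt a L : (bin a L < 2 ^ L)%nat.
Proof. induction L; simpl; [lia|]. destruct (a L); lia. Qed.

Lemma bin_agree a b L : agree L a b -> bin a L = bin b L.
Proof.
  induction L; intros H; simpl; auto.
  rewrite IHL by (apply (agree_le (S L)); auto). rewrite (H L) by lia. reflexivity.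
Qed.

Lemma bin_inj a b L : bin a L = bin b L -> agree L a b.
Proof.
  induction L; intros H; simpl in H.
  - intros i Hi; lia.
  - pose proof (bin_lt a L). pose proof (bin_lt b L).
    assert (a L = b L) as E.
    { destruct (a L), (b L); auto; lia. }
    rewrite E in H. assert (bin a L = bin b L) by lia.
    intros i Hi. destruct (Nat.eq_dec i L) as [->|Hne]; auto.
    apply IHL; auto. lia.
Qed.

Fixpoint lookup (lst : list (nat * nat * nat)) (c : nat) (dflt : nat * nat) : nat * nat :=
  match lst with
  | [] => dflt
  | (c', s, t) :: l => if Nat.eqb c c' then (s, t) else lookup l c dflt
  end.

Lemma lookup_map (F : nat -> nat * nat * nat) (l : list nat) i dflt :
  In i l -> (forall j, In j l -> j <> i -> fst (fst (F j)) <> fst (fst (F i))) ->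
  lookup (map F l) (fst (fst (F i))) dflt = (snd (fst (F i)), snd (F i)).
Proof.
  induction l as [|j l IH]; intros Hi Hd; [destruct Hi|].
  simpl. destruct (F j) as [[c s] t] eqn:Ej.
  destruct (Nat.eqb_spec (fst (fst (F i))) c) as [E|E].
  - destruct (Nat.eq_dec j i) as [->|Hne].
    + rewrite Ej. reflexivity.
    + exfalso. apply (Hd j (or_introl eq_refl) Hne). rewrite Ej. simpl. auto.
  - destruct Hi as [->|Hi].
    + rewrite Ej in E. simpl in E. congruence.
    + apply IH; auto. intros j' Hj' Hne. apply Hd; auto. now right.
Qed.

Fixpoint decl (fuel n : nat) : list nat :=
  match fuel with
  | O => []
  | S f => match n with
           | O => []
           | S m => fst (of_nat m) :: decl f (snd (of_nat m))
           end
  end.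

Lemma decl_surj (l : list nat) : exists n, forall fuel, (n <= fuel)%nat -> decl fuel n = l.
Proof.
  induction l as [|a l [n0 IH]].
  - exists O. intros [|f] _; reflexivity.
  - exists (S (to_nat (a, n0))). intros [|f] Hf; [lia|].
    cbn [decl]. rewrite cancel_of_to. cbn [fst snd]. f_equal. apply IH.
    pose proof (to_nat_non_decreasing a n0). lia.
Qed.

Definition Req := (nat * nat * nat * nat * list (nat * nat * nat))%type.
Definition dec3 (m : nat) : nat * nat * nat :=
  (fst (of_nat m), fst (of_nat (snd (of_nat m))), snd (of_nat (snd (of_nat m)))).
Definition enc3 (x : nat * nat * nat) : nat :=
  match x with (c, s, t) => to_nat (c, to_nat (s, t)) end.
Lemma dec3_enc3 x : dec3 (enc3 x) = x.
Proof. destruct x as [[c s] t]. unfold dec3, enc3. rewrite !cancel_of_to. cbn [fst snd].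
  rewrite cancel_of_to. reflexivity. Qed.

Definition decode (n : nat) : Req :=
  let (L, n1) := of_nat n in
  let (E, n2) := of_nat n1 in
  let (N, n3) := of_nat n2 in
  let (dt, n4) := of_nat n3 in
  (L, E, N, dt, map dec3 (decl n4 n4)).

Lemma decode_surj (r : Req) : exists n, decode n = r.
Proof.
  destruct r as [[[[L E] N] dt] lst].
  destruct (decl_surj (map enc3 lst)) as [n4 H4].
  exists (to_nat (L, to_nat (E, to_nat (N, to_nat (dt, n4))))).
  unfold decode. rewrite !cancel_of_to. rewrite H4 by lia.
  rewrite map_map. f_equal. rewrite <- (map_id lst) at 2. apply map_ext. apply dec3_enc3.
Qed.

Definition req (k : nat) : Req := decode (fst (of_nat k)).

Lemma req_often (r : Req) (M : nat) : exists k, (M <= k)%nat /\ req k = r.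
Proof.
  destruct (decode_surj r) as [n Hn]. exists (to_nat (n, M)). split.
  - pose proof (to_nat_non_decreasing n M). lia.
  - unfold req. rewrite cancel_of_to. exact Hn.
Qed.

Definition rL (r : Req) : nat := match r with (L, _, _, _, _) => L end.
Definition rE (r : Req) : nat := match r with (_, E, _, _, _) => E end.
Definition rN (r : Req) : nat := match r with (_, _, N, _, _) => N end.
Definition rdata (r : Req) (a : nat -> bool) : nat * nat :=
  match r with (L, _, _, dt, lst) => lookup lst (bin a L) (O, dt) end.

Lemma rdata_agree r a b k : (rL r <= k)%nat -> agree k a b -> rdata r a = rdata r b.
Proof.
  destruct r as [[[[L E] N] dt] lst]. simpl. intros H1 H2.
  rewrite (bin_agree a b L); auto. eapply agree_le; eauto.
Qed.

Lemma list_eventually {A : Type} (l : list A) (P : A -> nat -> Prop) :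
  (forall a, In a l -> exists n, forall m, (n <= m)%nat -> P a m) ->
  exists n, forall m, (n <= m)%nat -> forall a, In a l -> P a m.
Proof.
  induction l as [|a l IH]; intros H.
  - exists 0%nat. intros m _ a [].
  - destruct (H a (or_introl eq_refl)) as [n1 Hn1].
    destruct IH as [n2 Hn2]. { intros b Hb. apply H. now right. }
    exists (Nat.max n1 n2). intros m Hm b [<-|Hb].
    + apply Hn1. lia.
    + apply Hn2; auto. lia.
Qed.

Lemma arch_inv (e : R) : e > 0 -> exists n : nat, / (INR n + 1) < e.
Proof.
  intros He. destruct (archimed (/ e)) as [H1 _].
  assert (0 <= IZR (up (/ e))).
  { apply Rlt_le. apply Rlt_trans with (/e); auto. apply Rinv_0_lt_compat; lra. }
  exists (Z.to_nat (up (/ e))).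
  rewrite INR_IZR_INZ. rewrite Z2Nat.id.
  2: { apply le_IZR. lra. }
  assert (0 < /e) by (apply Rinv_0_lt_compat; lra).
  rewrite <- (Rinv_inv e) at 2.
  apply Rinv_lt_contravar. { apply Rmult_lt_0_compat; lra. } lra.
Qed.

Lemma inv_mono (m n : nat) : (m <= n)%nat -> / (INR n + 1) <= / (INR m + 1).
Proof.
  intros H. apply Rinv_le_contravar. { pose proof (pos_INR m); lra. }
  apply le_INR in H. lra.
Qed.

Lemma inv_pos (n : nat) : 0 < / (INR n + 1).
Proof. apply Rinv_0_lt_compat. pose proof (pos_INR n); lra. Qed.

Lemma pow_half_small (e : R) : e > 0 -> exists n : nat, forall m, (n <= m)%nat -> (/2)^m < e.
Proof.
  intros He. destruct (pow_lt_1_zero (/2)) with (y := e) as [N HN]; auto.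
  { rewrite Rabs_pos_eq; lra. }
  exists N. intros m Hm. specialize (HN m Hm). rewrite Rabs_pos_eq in HN; auto.
  apply pow_le. lra.
Qed.

Section Dyn.
Variable X : Type.
Variable rho : X -> X -> R.
Variable T : X -> X.
Hypothesis Hmetric : is_metric rho.
Hypothesis Hcompact : compact_space rho.
Hypothesis Hcont : continuous_map rho T.
Hypothesis Hwm : weakly_mixing rho T.
Variables xa xb : X.
Hypothesis Hab : xa <> xb.

Lemma rho_refl x : rho x x = 0.
Proof. destruct Hmetric as [H _]. now apply H. Qed.
Lemma rho_sym x y : rho x y = rho y x.
Proof. destruct Hmetric as [_ [H _]]. apply H. Qed.
Lemma rho_tri x y z : rho x z <= rho x y + rho y z.
Proof. destruct Hmetric as [_ [_ H]]. apply H. Qed.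
Lemma rho_pos x y : 0 <= rho x y.
Proof. pose proof (rho_tri x y x). rewrite rho_refl, (rho_sym y x) in H. lra. Qed.
Lemma rho_eq x y : rho x y = 0 -> x = y.
Proof. destruct Hmetric as [H _]. apply H. Qed.

Lemma ball_open (c : X) (r : R) : open_set rho (fun y => rho c y < r).
Proof.
  intros x Hx. exists (r - rho c x). split; [lra|].
  intros y Hy. pose proof (rho_tri c x y). lra.
Qed.

Lemma iter_cont n x eps : eps > 0 -> exists del, del > 0 /\
  forall y, rho x y < del -> rho (Nat.iter n T x) (Nat.iter n T y) < eps.
Proof.
  revert eps. induction n; intros eps He.
  - exists eps. simpl. auto.
  - destruct (Hcont (Nat.iter n T x) eps He) as [d1 [Hd1 H1]].
    destruct (IHn d1 Hd1) as [d2 [Hd2 H2]].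
    exists d2. split; auto. intros y Hy. simpl. apply H1. apply H2. auto.
Qed.

Lemma preimage_open n (V : X -> Prop) : open_set rho V ->
  open_set rho (fun y => V (Nat.iter n T y)).
Proof.
  intros HV x Hx. destruct (HV _ Hx) as [e [He H]].
  destruct (iter_cont n x e He) as [d [Hd H2]].
  exists d. split; auto.
Qed.

Lemma inter_open (U V : X -> Prop) : open_set rho U -> open_set rho V ->
  open_set rho (fun y => U y /\ V y).
Proof.
  intros HU HV x [Ux Vx]. destruct (HU _ Ux) as [e1 [He1 H1]].
  destruct (HV _ Vx) as [e2 [He2 H2]].
  exists (Rmin e1 e2). split. { apply Rmin_pos; auto. }
  intros y Hy. split.
  - apply H1. pose proof (Rmin_l e1 e2). lra.
  - apply H2. pose proof (Rmin_r e1 e2). lra.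
Qed.

Lemma iter_prod n p : Nat.iter n (prod_map T) p = (Nat.iter n T (fst p), Nat.iter n T (snd p)).
Proof.
  induction n; simpl. { now destruct p. }
  rewrite IHn. reflexivity.
Qed.

Lemma prod_open (U V : X -> Prop) : open_set rho U -> open_set rho V ->
  open_set (prod_dist rho) (fun p => U (fst p) /\ V (snd p)).
Proof.
  intros HU HV p [Up Vp]. destruct (HU _ Up) as [e1 [He1 H1]].
  destruct (HV _ Vp) as [e2 [He2 H2]].
  exists (Rmin e1 e2). split. { apply Rmin_pos; auto. }
  intros q Hq. unfold prod_dist in Hq.
  pose proof (Rmax_l (rho (fst p) (fst q)) (rho (snd p) (snd q))).
  pose proof (Rmax_r (rho (fst p) (fst q)) (rho (snd p) (snd q))).
  pose proof (Rmin_l e1 e2). pose proof (Rmin_r e1 e2).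
  split; [apply H1 | apply H2]; lra.
Qed.

Definition nonempty (U : X -> Prop) := exists u, U u.

Lemma wm_use (U1 V1 U2 V2 : X -> Prop) :
  open_set rho U1 -> open_set rho V1 -> open_set rho U2 -> open_set rho V2 ->
  nonempty U1 -> nonempty V1 -> nonempty U2 -> nonempty V2 ->
  exists k, (0 < k)%nat /\ exists u v, U1 u /\ V1 v /\ U2 (Nat.iter k T u) /\ V2 (Nat.iter k T v).
Proof.
  intros O1 O2 O3 O4 [u1 H1] [v1 H2] [u2 H3] [v2 H4].
  destruct (Hwm (fun p => U1 (fst p) /\ V1 (snd p)) (fun p => U2 (fst p) /\ V2 (snd p)))
    as [k [Hk [p [[Hp1 Hp2] Hp3]]]].
  - now apply prod_open.
  - now apply prod_open.
  - exists (u1, v1). simpl. auto.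
  - exists (u2, v2). simpl. auto.
  - rewrite iter_prod in Hp3. simpl in Hp3. exists k. split; auto.
    exists (fst p), (snd p). tauto.
Qed.

Lemma trans1 (U V : X -> Prop) : open_set rho U -> open_set rho V ->
  nonempty U -> nonempty V ->
  exists n, (0 < n)%nat /\ exists u, U u /\ V (Nat.iter n T u).
Proof.
  intros. destruct (wm_use U U V V) as [k [Hk [u [v [A [B [C D]]]]]]]; auto.
  exists k. split; auto. exists u. split; auto.
Qed.


Lemma full_open : open_set rho (fun _ => True).
Proof. intros x _. exists 1. split; [lra|auto]. Qed.

Lemma combine2 (U1 V1 U2 V2 : X -> Prop) :
  open_set rho U1 -> open_set rho V1 -> open_set rho U2 -> open_set rho V2 ->
  nonempty U1 -> nonempty V1 -> nonempty U2 -> nonempty V2 ->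
  exists U V, open_set rho U /\ open_set rho V /\ nonempty U /\ nonempty V /\
   forall n u, U u -> V (Nat.iter n T u) ->
     (U1 u /\ V1 (Nat.iter n T u)) /\ exists u', U2 u' /\ V2 (Nat.iter n T u').
Proof.
  intros O1 O2 O3 O4 N1 N2 N3 N4.
  destruct (wm_use U1 V1 U2 V2) as [k [Hk [u [v [A [B [C D]]]]]]]; auto.
  exists (fun y => U1 y /\ U2 (Nat.iter k T y)), (fun y => V1 y /\ V2 (Nat.iter k T y)).
  split; [apply inter_open; auto; now apply preimage_open|].
  split; [apply inter_open; auto; now apply preimage_open|].
  split; [now exists u|]. split; [now exists v|].
  intros n w [Hw1 Hw2] [Hv1 Hv2]. split; auto.
  exists (Nat.iter k T w). split; auto.
  rewrite <- Nat.iter_add, Nat.add_comm, Nat.iter_add. auto.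
Qed.

Lemma combine_list {A : Type} (l : list A) (U V : A -> X -> Prop) :
  (forall a, In a l -> open_set rho (U a) /\ open_set rho (V a) /\ nonempty (U a) /\ nonempty (V a)) ->
  exists U0 V0, open_set rho U0 /\ open_set rho V0 /\ nonempty U0 /\ nonempty V0 /\
   forall n u, U0 u -> V0 (Nat.iter n T u) ->
     forall a, In a l -> exists u', U a u' /\ V a (Nat.iter n T u').
Proof.
  induction l as [|a l IH]; intros H.
  - exists (fun _ => True), (fun _ => True).
    split; [apply full_open|]. split; [apply full_open|].
    split; [exists xa; auto|]. split; [exists xa; auto|]. intros n u _ _ a [].
  - destruct IH as [U0 [V0 [O1 [O2 [N1 [N2 HH]]]]]]. { intros b Hb; apply H; now right. }
    destruct (H a (or_introl eq_refl)) as [O3 [O4 [N3 N4]]].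
    destruct (combine2 U0 V0 (U a) (V a)) as [U1 [V1 [P1 [P2 [P3 [P4 HC]]]]]]; auto.
    exists U1, V1. do 4 (split; auto).
    intros n u Hu Hv b [<-|Hb].
    + apply (HC n u Hu Hv).
    + destruct (HC n u Hu Hv) as [[Hu' Hv'] _]. eauto.
Qed.

Lemma large_times (N : nat) : forall (U V : X -> Prop), open_set rho U -> open_set rho V ->
  nonempty U -> nonempty V ->
  exists n, (N <= n)%nat /\ exists u, U u /\ V (Nat.iter n T u).
Proof.
  induction N; intros U V OU OV NU NV.
  - destruct (trans1 U V) as [n [_ H]]; auto. exists n. split; [lia|auto].
  - destruct (trans1 V V) as [m [Hm [v [Hv1 Hv2]]]]; auto.
    destruct (IHN U (fun y => V y /\ V (Nat.iter m T y))) as [n [Hn [u [Hu1 [Hu2 Hu3]]]]]; auto.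
    { apply inter_open; auto. now apply preimage_open. }
    { now exists v. }
    exists (m + n)%nat. split; [lia|]. exists u. split; auto.
    rewrite Nat.iter_add. auto.
Qed.

Lemma multi_trans {A : Type} (l : list A) (U V : A -> X -> Prop) (N : nat) :
  (forall a, In a l -> open_set rho (U a) /\ open_set rho (V a) /\ nonempty (U a) /\ nonempty (V a)) ->
  exists n, (N <= n)%nat /\ forall a, In a l -> exists u, U a u /\ V a (Nat.iter n T u).
Proof.
  intros H. destruct (combine_list l U V H) as [U0 [V0 [O1 [O2 [N1 [N2 HH]]]]]].
  destruct (large_times N U0 V0) as [n [Hn [u [Hu Hv]]]]; auto.
  exists n. split; auto. intros a Ha. eapply HH; eauto.
Qed.

Lemma T_surj y : exists x, T x = y.
Proof.
  apply NNPP. intros Hn.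
  assert (Hne : forall x, T x <> y) by (intros x Hx; apply Hn; eauto).
  destruct (Hcompact nat (fun m z => rho (T z) y > / (INR m + 1))) as [l Hl].
  - intros m z Hz. destruct (Hcont z (rho (T z) y - / (INR m + 1))) as [d [Hd H]]. lra.
    exists d. split; auto. intros w Hw. specialize (H w Hw).
    pose proof (rho_tri (T z) (T w) y). lra.
  - intros z. assert (rho (T z) y > 0).
    { pose proof (rho_pos (T z) y). destruct (Req_dec (rho (T z) y) 0) as [E|E]; [|lra].
      exfalso. apply (Hne z). now apply rho_eq. }
    destruct (arch_inv _ H) as [m Hm]. exists m. lra.
  - destruct (list_eventually l (fun m K => / (INR K + 1) <= / (INR m + 1))) as [K HK].
    { intros m _. exists m. intros k Hk. now apply inv_mono. }
    destruct (trans1 (fun _ => True) (fun z => rho y z < / (INR K + 1))) as [n [Hn0 [u [_ Hu]]]].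
    + apply full_open.
    + apply ball_open.
    + exists xa; auto.
    + exists y. rewrite rho_refl. apply inv_pos.
    + destruct n as [|n]; [lia|]. simpl in Hu.
      destruct (Hl (Nat.iter n T u)) as [m [Hm1 Hm2]].
      specialize (HK K (le_n K) m Hm1). rewrite rho_sym in Hu. lra.
Qed.

Lemma iter_surj n y : exists x, Nat.iter n T x = y.
Proof.
  induction n. { now exists y. }
  destruct IHn as [x Hx]. destruct (T_surj x) as [z Hz]. exists z.
  rewrite Nat.iter_succ_r. now subst.
Qed.

Lemma perfect x e : e > 0 -> exists y, y <> x /\ rho x y < e.
Proof.
  intros He. apply NNPP. intros Hn.
  assert (Hiso : forall y, rho x y < e -> y = x).
  { intros y Hy. apply NNPP. intros Hyx. apply Hn. eauto. }
  assert (exists b, b <> x) as [b Hb].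
  { destruct (classic (xa = x)) as [E|E]; [exists xb; congruence | now exists xa]. }
  assert (Hbx : rho b x > 0).
  { pose proof (rho_pos b x). destruct (Req_dec (rho b x) 0) as [E|E]; [|lra].
    exfalso. apply Hb. now apply rho_eq. }
  destruct (wm_use (fun y => rho x y < e) (fun y => rho x y < e) (fun y => rho x y < e)
    (fun y => rho b y < rho b x)) as [k [Hk [u [v [A [B [C D]]]]]]];
    try apply ball_open; try (exists x; rewrite rho_refl; lra).
  { exists b. rewrite rho_refl. lra. }
  apply Hiso in B. subst v.
  apply Hiso in A. subst u. rewrite (Hiso _ C) in D. lra.
Qed.

Lemma complete (c : nat -> X) :
  (forall k j, (k <= j)%nat -> rho (c k) (c j) <= (/2)^k) ->
  exists y, forall k, rho (c k) y <= 2 * (/2)^k.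
Proof.
  intros Hc. apply NNPP. intros Hn.
  destruct (Hcompact nat (fun k y => rho (c k) y > 2 * (/2)^k)) as [l Hl].
  - intros k y Hy. exists (rho (c k) y - 2 * (/2)^k). split; [lra|].
    intros z Hz. pose proof (rho_tri (c k) z y). rewrite (rho_sym z y) in H. lra.
  - intros y. apply NNPP. intros H. apply Hn. exists y. intros k.
    apply Rnot_gt_le. intros H'. apply H. exists k. exact H'.
  - destruct (list_eventually l (fun k K => (k <= K)%nat)) as [K HK].
    { intros k _. exists k. auto. }
    destruct (Hl (c K)) as [k [Hk1 Hk2]].
    specialize (HK K (le_n K) k Hk1). specialize (Hc k K HK).
    cbv beta in Hk2. pose proof (rho_pos (c k) (c K)).
    pose proof (pow_lt (/2) k). lra.
Qed.

Lemma net e : e > 0 -> exists l : list X, forall x, exists y, In y l /\ rho y x < e.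
Proof.
  intros He. destruct (Hcompact X (fun y x => rho y x < e)) as [l Hl].
  - intros y. apply ball_open.
  - intros x. exists x. rewrite rho_refl. lra.
  - exists l. exact Hl.
Qed.


Lemma new_point (l : list X) : forall x e, e > 0 -> exists w, ~ In w l /\ rho x w < e.
Proof.
  induction l as [|z l IH]; intros x e He.
  - exists x. split; auto. rewrite rho_refl. lra.
  - destruct (classic (x = z)) as [<-|Hxz].
    + destruct (perfect x e He) as [y [Hy1 Hy2]].
      assert (Hyx : rho y x > 0).
      { pose proof (rho_pos y x). destruct (Req_dec (rho y x) 0) as [E|E]; [|lra].
        exfalso. apply Hy1. now apply rho_eq. }
      destruct (IH y (Rmin (e - rho x y) (rho y x))) as [w [Hw1 Hw2]].
      { apply Rmin_pos; lra. }
      pose proof (Rmin_l (e - rho x y) (rho y x)). pose proof (Rmin_r (e - rho x y) (rho y x)).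
      exists w. split.
      * intros [E|E]; [|auto]. subst w. lra.
      * pose proof (rho_tri x y w). lra.
    + assert (Hxz' : rho x z > 0).
      { pose proof (rho_pos x z). destruct (Req_dec (rho x z) 0) as [E|E]; [|lra].
        exfalso. apply Hxz. now apply rho_eq. }
      destruct (IH x (Rmin e (rho x z))) as [w [Hw1 Hw2]]. { apply Rmin_pos; lra. }
      pose proof (Rmin_l e (rho x z)). pose proof (Rmin_r e (rho x z)).
      exists w. split; [|lra].
      intros [E|E]; [|auto]. subst w. lra.
Qed.

Lemma distinct_points (d : nat) : exists z : nat -> X,
  forall i j, (i < d)%nat -> (j < d)%nat -> i <> j -> z i <> z j.
Proof.
  induction d.
  - exists (fun _ => xa). intros; lia.
  - destruct IHd as [z Hz].
    destruct (new_point (map z (seq 0 d)) xa 1) as [w [Hw _]]; [lra|].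
    exists (fun i => if Nat.eqb i d then w else z i).
    intros i j Hi Hj Hij.
    destruct (Nat.eqb_spec i d), (Nat.eqb_spec j d); try lia.
    + intros E. apply Hw. rewrite E. apply in_map. apply in_seq. lia.
    + intros E. apply Hw. rewrite <- E. apply in_map. apply in_seq. lia.
    + apply Hz; lia.
Qed.

Lemma separated (G : nat -> X) (Gd : forall y e, e > 0 -> exists j, rho (G j) y < e) (d : nat) :
  exists (D : R) (idx : nat -> nat), 0 < D < 1 /\
    forall i j, (i < d)%nat -> (j < d)%nat -> i <> j -> rho (G (idx i)) (G (idx j)) > 3 * D.
Proof.
  destruct (distinct_points d) as [z Hz].
  destruct (list_eventually (list_prod (seq 0 d) (seq 0 d))
     (fun p K => fst p = snd p \/ rho (z (fst p)) (z (snd p)) >= / (INR K + 1))) as [K HK].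
  { intros [i j] Hp. apply in_prod_iff in Hp. destruct Hp as [Hi Hj].
    apply in_seq in Hi. apply in_seq in Hj. simpl.
    destruct (Nat.eq_dec i j) as [E|E].
    - exists O. intros; now left.
    - assert (Hp : rho (z i) (z j) > 0).
      { pose proof (rho_pos (z i) (z j)). destruct (Req_dec (rho (z i) (z j)) 0) as [E2|E2]; [|lra].
        exfalso. apply (Hz i j); try lia. now apply rho_eq. }
      destruct (arch_inv _ Hp) as [n Hn]. exists n. intros m Hm. right.
      pose proof (inv_mono n m Hm). lra. }
  set (m := / (INR K + 1)). assert (Hm : 0 < m) by apply inv_pos.
  set (D := Rmin (m / 6) (1/2)).
  assert (HD : 0 < D) by (apply Rmin_pos; lra).
  assert (HD1 : D <= m/6) by apply Rmin_l. assert (HD2 : D <= 1/2) by apply Rmin_r.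
  exists D, (fun i => proj1_sig (constructive_indefinite_description _ (Gd (z i) D HD))).
  split; [split; lra|]. intros i j Hi Hj Hij.
  destruct (constructive_indefinite_description _ (Gd (z i) D HD)) as [a Ha].
  destruct (constructive_indefinite_description _ (Gd (z j) D HD)) as [b Hb]. simpl.
  destruct (HK K (le_n K) (i, j)) as [E|E].
  { apply in_prod; apply in_seq; lia. }
  { simpl in E. lia. }
  simpl in E. fold m in E.
  pose proof (rho_tri (z i) (G a) (z j)) as T1. pose proof (rho_tri (G a) (G b) (z j)) as T2.
  rewrite (rho_sym (z i) (G a)) in T1. lra.
Qed.


Definition State := (nat -> bool) -> (X * R)%type.
Definition valid (k : nat) (s : State) :=
  forall a, snd (s a) > 0 /\ forall b, agree k a b -> s a = s b.
Definition nested (s s1 : State) :=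
  forall a, rho (fst (s a)) (fst (s1 a)) + snd (s1 a) < snd (s a) /\ snd (s1 a) <= snd (s a) / 2.
Definition disjoint (k : nat) (s1 : State) :=
  forall a b, agree k a b -> a k <> b k -> forall y,
    ~ (rho (fst (s1 a)) y < snd (s1 a) /\ rho (fst (s1 b)) y < snd (s1 b)).

Lemma rho_pos_neq x y : x <> y -> rho x y > 0.
Proof.
  intros H. pose proof (rho_pos x y). destruct (Req_dec (rho x y) 0) as [E|E]; [|lra].
  exfalso. apply H. now apply rho_eq.
Qed.

Lemma split_step k s : valid k s -> exists s1, valid (S k) s1 /\ nested s s1 /\ disjoint k s1.
Proof.
  intros Hv.
  assert (Hp : forall (c : X) (r : R), exists y, r > 0 -> y <> c /\ rho c y < r).
  { intros c r. destruct (Rlt_dec 0 r) as [H|H].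
    - destruct (perfect c r H) as [y Hy]. exists y. auto.
    - exists c. intros; lra. }
  set (pk := fun c r => proj1_sig (constructive_indefinite_description _ (Hp c r))).
  assert (Hpk : forall c r, r > 0 -> pk c r <> c /\ rho c (pk c r) < r).
  { intros c r Hr. unfold pk. destruct (constructive_indefinite_description _ (Hp c r)) as [y Hy].
    simpl. auto. }
  set (rad := fun c r => Rmin (rho c (pk c r) / 2) (Rmin ((r - rho c (pk c r)) / 2) (r / 2))).
  exists (fun a : nat -> bool => (if a k then pk (fst (s a)) (snd (s a)) else fst (s a), rad (fst (s a)) (snd (s a)))).
  assert (Hrad : forall c r, r > 0 -> rad c r > 0 /\ rad c r <= rho c (pk c r) / 2 /\
     rad c r <= (r - rho c (pk c r)) / 2 /\ rad c r <= r / 2).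
  { intros c r Hr. destruct (Hpk c r Hr) as [H1 H2]. pose proof (rho_pos_neq _ _ H1).
    rewrite rho_sym in H. unfold rad.
    pose proof (Rmin_l (rho c (pk c r) / 2) (Rmin ((r - rho c (pk c r)) / 2) (r / 2))).
    pose proof (Rmin_r (rho c (pk c r) / 2) (Rmin ((r - rho c (pk c r)) / 2) (r / 2))).
    pose proof (Rmin_l ((r - rho c (pk c r)) / 2) (r / 2)).
    pose proof (Rmin_r ((r - rho c (pk c r)) / 2) (r / 2)).
    repeat split; try lra. repeat apply Rmin_pos; lra. }
  split; [|split].
  - intros a. destruct (Hv a) as [Ha1 Ha2]. simpl. split; [apply Hrad; auto|].
    intros b Hb. rewrite (Ha2 b) by (eapply agree_le; [|exact Hb]; lia).
    rewrite (Hb k) by lia. reflexivity.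
  - intros a. destruct (Hv a) as [Ha1 _]. simpl.
    destruct (Hrad (fst (s a)) _ Ha1) as [R1 [R2 [R3 R4]]].
    destruct (a k); split; try lra. rewrite rho_refl. lra.
  - intros a b Hab0 Hk y [Hy1 Hy2]. simpl in Hy1, Hy2.
    destruct (Hv a) as [Ha1 Ha2]. rewrite <- (Ha2 b Hab0) in Hy2.
    destruct (Hrad (fst (s a)) _ Ha1) as [R1 [R2 [R3 R4]]].
    pose proof (rho_tri (fst (s a)) y (pk (fst (s a)) (snd (s a)))).
    pose proof (rho_sym y (pk (fst (s a)) (snd (s a)))).
    destruct (a k), (b k); try congruence; simpl in *; lra.
Qed.

Lemma rep_eq k a b : agree k a b -> rep k a = rep k b.
Proof.
  intros H. apply functional_extensionality. intros i. unfold rep.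
  destruct (Nat.ltb_spec i k); auto.
Qed.

Lemma refine_step k s1 (sg : (nat -> bool) -> nat) (g : (nat -> bool) -> X) (eps : R) (N : nat) :
  valid k s1 -> eps > 0 -> (forall a b, agree k a b -> sg a = sg b /\ g a = g b) ->
  exists n, (N <= n)%nat /\ exists s2, valid k s2 /\ nested s1 s2 /\
    forall a y, rho (fst (s2 a)) y < snd (s2 a) -> rho (Nat.iter (n + sg a) T y) (g a) < eps.
Proof.
  intros Hv He Hg.
  destruct (multi_trans (words k) (fun w y => rho (fst (s1 w)) y < snd (s1 w))
     (fun w y => rho (g w) (Nat.iter (sg w) T y) < eps) N) as [n [Hn H]].
  { intros w _. split; [apply ball_open|]. split.
    - apply (preimage_open (sg w) (fun z => rho (g w) z < eps)). apply ball_open.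
    - split.
      + exists (fst (s1 w)). rewrite rho_refl. apply Hv.
      + destruct (iter_surj (sg w) (g w)) as [x Hx]. exists x. rewrite Hx, rho_refl. lra. }
  exists n. split; auto.
  assert (Hu : forall w, exists u, In w (words k) -> rho (fst (s1 w)) u < snd (s1 w) /\
     rho (g w) (Nat.iter (sg w) T (Nat.iter n T u)) < eps).
  { intros w. destruct (classic (In w (words k))) as [Hw|Hw].
    - destruct (H w Hw) as [u Hu]. exists u. auto.
    - exists xa. tauto. }
  set (uf := fun w => proj1_sig (constructive_indefinite_description _ (Hu w))).
  assert (Huf : forall a, rho (fst (s1 (rep k a))) (uf (rep k a)) < snd (s1 (rep k a)) /\
     rho (g (rep k a)) (Nat.iter (sg (rep k a)) T (Nat.iter n T (uf (rep k a)))) < eps).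
  { intros a. unfold uf. destruct (constructive_indefinite_description _ (Hu (rep k a))) as [u Hu'].
    simpl. apply Hu'. apply rep_in. }
  assert (Hd : forall w, exists del, In w (words k) -> del > 0 /\ forall y, rho (uf w) y < del ->
     rho (g w) (Nat.iter (sg w) T (Nat.iter n T y)) < eps).
  { intros w. destruct (classic (In w (words k))) as [Hw|Hw]; [|exists 0; tauto].
    destruct (preimage_open n (fun z => rho (g w) (Nat.iter (sg w) T z) < eps)) with (x := uf w)
      as [del Hdel].
    - apply (preimage_open (sg w) (fun z => rho (g w) z < eps)). apply ball_open.
    - unfold uf. destruct (constructive_indefinite_description _ (Hu w)) as [u Hu'].
      simpl. apply Hu'. auto.
    - exists del. auto. }
  set (df := fun w => proj1_sig (constructive_indefinite_description _ (Hd w))).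
  assert (Hdf : forall a, df (rep k a) > 0 /\ forall y, rho (uf (rep k a)) y < df (rep k a) ->
     rho (g (rep k a)) (Nat.iter (sg (rep k a)) T (Nat.iter n T y)) < eps).
  { intros a. unfold df. destruct (constructive_indefinite_description _ (Hd (rep k a))) as [d Hd'].
    simpl. apply Hd'. apply rep_in. }
  set (r2 := fun w => Rmin (df w) (Rmin ((snd (s1 w) - rho (fst (s1 w)) (uf w)) / 2)
                                        (snd (s1 w) / 2))).
  assert (Hr2 : forall a, r2 (rep k a) > 0 /\ r2 (rep k a) <= df (rep k a) /\
      r2 (rep k a) <= (snd (s1 (rep k a)) - rho (fst (s1 (rep k a))) (uf (rep k a))) / 2 /\
      r2 (rep k a) <= snd (s1 (rep k a)) / 2).
  { intros a. destruct (Hdf a) as [D1 _]. destruct (Huf a) as [U1 _]. destruct (Hv (rep k a)) as [V1 _].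
    unfold r2. set (w := rep k a) in *.
    pose proof (Rmin_l (df w) (Rmin ((snd (s1 w) - rho (fst (s1 w)) (uf w)) / 2) (snd (s1 w) / 2))).
    pose proof (Rmin_r (df w) (Rmin ((snd (s1 w) - rho (fst (s1 w)) (uf w)) / 2) (snd (s1 w) / 2))).
    pose proof (Rmin_l ((snd (s1 w) - rho (fst (s1 w)) (uf w)) / 2) (snd (s1 w) / 2)).
    pose proof (Rmin_r ((snd (s1 w) - rho (fst (s1 w)) (uf w)) / 2) (snd (s1 w) / 2)).
    repeat split; try lra. repeat apply Rmin_pos; lra. }
  assert (Hrep : forall a, s1 (rep k a) = s1 a).
  { intros a. symmetry. apply (proj2 (Hv a)). apply rep_agree. }
  exists (fun a : nat -> bool => (uf (rep k a), r2 (rep k a))). split; [|split].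
  - intros a. simpl. split; [apply Hr2|]. intros b Hb.
    rewrite (rep_eq k a b Hb). reflexivity.
  - intros a. simpl. destruct (Hr2 a) as [R1 [R2 [R3 R4]]]. rewrite Hrep in R3, R4. lra.
  - intros a y Hy. simpl in Hy. destruct (Hr2 a) as [R1 [R2 _]].
    destruct (Hdf a) as [_ D2]. specialize (D2 y ltac:(lra)).
    destruct (Hg a (rep k a) (rep_agree k a)) as [E1 E2]. rewrite <- E1, <- E2 in D2.
    rewrite <- Nat.iter_add, Nat.add_comm in D2. rewrite rho_sym. exact D2.
Qed.


Lemma ball_sub (s1 s2 : State) a y : nested s1 s2 ->
  rho (fst (s2 a)) y < snd (s2 a) -> rho (fst (s1 a)) y < snd (s1 a).
Proof.
  intros Hn Hy. destruct (Hn a) as [H1 _]. pose proof (rho_tri (fst (s1 a)) (fst (s2 a)) y). lra.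
Qed.

Lemma nested_trans (s s1 s2 : State) : (forall a, snd (s2 a) > 0) ->
  nested s s1 -> nested s1 s2 -> nested s s2.
Proof.
  intros Hp H1 H2 a. destruct (H1 a) as [A1 A2]. destruct (H2 a) as [B1 B2].
  pose proof (rho_tri (fst (s a)) (fst (s1 a)) (fst (s2 a))). pose proof (Hp a).
  split; lra.
Qed.

Lemma Hnet (m : nat) : exists l : list X, forall x, exists y, In y l /\ rho y x < / (INR m + 1).
Proof. apply net. apply inv_pos. Qed.

Definition netf (m : nat) : list X := proj1_sig (constructive_indefinite_description _ (Hnet m)).
Definition G (j : nat) : X := nth (snd (of_nat j)) (netf (fst (of_nat j))) xa.

Lemma G_dense y e : e > 0 -> exists j, rho (G j) y < e.
Proof.
  intros He. destruct (arch_inv e He) as [m Hm].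
  assert (Hn := proj2_sig (constructive_indefinite_description _ (Hnet m))).
  fold (netf m) in Hn. destruct (Hn y) as [y' [Hy1 Hy2]].
  destruct (In_nth _ _ xa Hy1) as [i [_ Hi]].
  exists (to_nat (m, i)). unfold G. rewrite cancel_of_to. cbn [fst snd]. unfold netf in *. rewrite Hi. lra.
Qed.

Definition reqprop (k : nat) (s' : State) :=
  (rL (req k) <= k)%nat -> exists n, (rN (req k) <= n)%nat /\ forall a y,
    rho (fst (s' a)) y < snd (s' a) ->
    rho (Nat.iter (n + fst (rdata (req k) a)) T y) (G (snd (rdata (req k) a))) < / (INR (rE (req k)) + 1).

Lemma step_ex k s : exists s', valid k s ->
  valid (S k) s' /\ nested s s' /\ disjoint k s' /\ reqprop k s'.
Proof.
  destruct (classic (valid k s)) as [Hv|Hv]; [|exists s; tauto].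
  destruct (split_step k s Hv) as [s1 [V1 [N1 D1]]].
  assert (Hfin : forall s2, valid (S k) s2 -> nested s1 s2 -> nested s s2 /\ disjoint k s2).
  { intros s2 V2 N2. split.
    - apply nested_trans with s1; auto. intros a; apply V2.
    - intros a b Hab0 Hk y [Hy1 Hy2]. apply (D1 a b Hab0 Hk y).
      split; eapply ball_sub; eauto. }
  destruct (le_dec (rL (req k)) k) as [Hle|Hle].
  - destruct (refine_step (S k) s1 (fun a => fst (rdata (req k) a)) (fun a => G (snd (rdata (req k) a)))
      (/ (INR (rE (req k)) + 1)) (rN (req k))) as [n [Hn [s2 [V2 [N2 R2]]]]]; auto.
    + apply inv_pos.
    + intros a b Hab0. rewrite (rdata_agree (req k) a b (S k)); auto.
    + exists s2. intros _. destruct (Hfin s2 V2 N2). split; [auto|split; [auto|split; [auto|]]].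
      intros _. exists n. split; auto.
  - destruct (refine_step (S k) s1 (fun _ => O) (fun _ => xa) 1 O) as [n [Hn [s2 [V2 [N2 R2]]]]]; auto.
    + lra.
    + exists s2. intros _. destruct (Hfin s2 V2 N2). split; [auto|split; [auto|split; [auto|]]].
      intros Hc. lia.
Qed.

Definition stepf k s : State := proj1_sig (constructive_indefinite_description _ (step_ex k s)).

Fixpoint st (k : nat) : State :=
  match k with
  | O => fun _ => (xa, 1)
  | S k => stepf k (st k)
  end.

Lemma st_valid k : valid k (st k) /\ (valid k (st k) ->
  valid (S k) (st (S k)) /\ nested (st k) (st (S k)) /\ disjoint k (st (S k)) /\ reqprop k (st (S k))).
Proof.
  induction k.
  - split.
    + intros a. simpl. split; [lra|auto].
    + simpl. unfold stepf. apply (proj2_sig (constructive_indefinite_description _ (step_ex 0 _))).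
  - destruct IHk as [H1 H2]. destruct (H2 H1) as [H3 _]. split; auto.
    intros _. simpl (st (S (S k))). unfold stepf.
    apply (proj2_sig (constructive_indefinite_description _ (step_ex (S k) _))). auto.
Qed.

Lemma st_props k : valid k (st k) /\ nested (st k) (st (S k)) /\ disjoint k (st (S k)) /\ reqprop k (st (S k)).
Proof. destruct (st_valid k) as [H1 H2]. destruct (H2 H1) as [_ H3]. auto. Qed.

Lemma st_rad k a : 0 < snd (st k a) <= (/2)^k.
Proof.
  induction k.
  - simpl. lra.
  - destruct (st_props k) as [_ [N _]]. destruct (st_props (S k)) as [V _].
    destruct (V a) as [P _]. destruct (N a) as [_ H]. simpl pow. split; lra.
Qed.

Lemma st_chain k m a : rho (fst (st k a)) (fst (st (k + m) a)) + snd (st (k + m) a) <= snd (st k a).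
Proof.
  induction m.
  - rewrite Nat.add_0_r, rho_refl. lra.
  - rewrite Nat.add_succ_r. destruct (st_props (k + m)) as [_ [N _]]. destruct (N a) as [H _].
    pose proof (rho_tri (fst (st k a)) (fst (st (k + m) a)) (fst (st (S (k + m)) a))). lra.
Qed.

Lemma st_cauchy a k j : (k <= j)%nat -> rho (fst (st k a)) (fst (st j a)) <= (/2)^k.
Proof.
  intros H. replace j with (k + (j - k))%nat by lia.
  pose proof (st_chain k (j - k) a). pose proof (st_rad k a). pose proof (st_rad (k + (j - k)) a). lra.
Qed.

Definition f (a : nat -> bool) : X :=
  proj1_sig (constructive_indefinite_description _ (complete (fun k => fst (st k a)) (st_cauchy a))).

Lemma f_in k a : rho (fst (st k a)) (f a) < snd (st k a).
Proof.
  assert (Hl : forall j, rho (fst (st j a)) (f a) <= 2 * (/2)^j).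
  { intros j. unfold f.
    apply (proj2_sig (constructive_indefinite_description _ (complete (fun k => fst (st k a)) (st_cauchy a)))). }
  destruct (st_props k) as [_ [N _]]. destruct (N a) as [N1 _].
  destruct (pow_half_small ((snd (st k a) - rho (fst (st k a)) (fst (st (S k) a)) - snd (st (S k) a)) / 2))
    as [j0 Hj0]. lra.
  set (j := Nat.max j0 (S k)).
  specialize (Hj0 j ltac:(unfold j; lia)).
  pose proof (st_chain (S k) (j - S k) a). replace (S k + (j - S k))%nat with j in H by (unfold j; lia).
  pose proof (Hl j). pose proof (st_rad j a).
  pose proof (rho_tri (fst (st k a)) (fst (st (S k) a)) (f a)).
  pose proof (rho_tri (fst (st (S k) a)) (fst (st j a)) (f a)).
  lra.
Qed.

Lemma first_diff (a b : nat -> bool) i : a i <> b i -> exists k, agree k a b /\ a k <> b k.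
Proof.
  induction i as [i IH] using lt_wf_ind. intros Hi.
  destruct (classic (agree i a b)) as [H|H]; [eauto|].
  apply not_all_ex_not in H. destruct H as [i' Hi'].
  apply imply_to_and in Hi'. destruct Hi' as [H1 H2]. eapply IH; eauto.
Qed.

Lemma f_cont : cantor_continuous rho f.
Proof.
  intros a eps He. destruct (pow_half_small (eps / 2)) as [k Hk]. lra.
  exists k. intros b Hb.
  destruct (st_props k) as [V _]. destruct (V a) as [_ Va].
  assert (E : st k a = st k b). { apply Va. intros i Hi. symmetry. auto. }
  pose proof (f_in k a). pose proof (f_in k b). rewrite <- E in H0.
  pose proof (rho_tri (f a) (fst (st k a)) (f b)). rewrite (rho_sym (f a) (fst (st k a))) in H1.
  pose proof (st_rad k a). specialize (Hk k (le_n k)). lra.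
Qed.

Lemma f_inj a b : f a = f b -> a = b.
Proof.
  intros E. apply NNPP. intros Hne.
  assert (exists i, a i <> b i) as [i Hi].
  { apply NNPP. intros H. apply Hne. apply functional_extensionality. intros i.
    apply NNPP. intros H'. apply H. eauto. }
  destruct (first_diff a b i Hi) as [k [Hk1 Hk2]].
  destruct (st_props k) as [_ [_ [D _]]].
  apply (D a b Hk1 Hk2 (f a)). split; [apply f_in|]. rewrite E. apply f_in.
Qed.


Lemma main_sec : exists (delta : nat -> R) (M : X -> Prop),
    (forall d : nat, (2 <= d)%nat -> 0 < delta d < 1) /\
    mycielski_set rho M /\
    (forall (d : nat) (x : nat -> X) (s : nat -> nat),
       (2 <= d)%nat ->
       (forall i, (i < d)%nat -> M (x i)) ->
       (forall i j, (i < d)%nat -> (j < d)%nat -> i <> j -> x i <> x j) ->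
       li_yorke_tuple rho T (delta d) d (fun i => Nat.iter (s i) T (x i))) /\
    (forall x, M x -> forall y, in_omega_limit rho T x y).
Proof.
  set (sepH := fun d => separated G G_dense d).
  set (sD := fun d => proj1_sig (constructive_indefinite_description _ (sepH d))).
  set (sI := fun d => proj1_sig (constructive_indefinite_description _
                 (proj2_sig (constructive_indefinite_description _ (sepH d))))).
  assert (Hs : forall d, 0 < sD d < 1 /\ forall i j, (i < d)%nat -> (j < d)%nat -> i <> j ->
     rho (G (sI d i)) (G (sI d j)) > 3 * sD d).
  { intros d. unfold sD, sI. destruct (constructive_indefinite_description _ (sepH d)) as [D HD].
    simpl. destruct (constructive_indefinite_description _ HD) as [idx Hidx]. simpl. exact Hidx. }
  exists sD, (fun x => exists a, f a = x).
  split; [intros d _; apply Hs|].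
  split.
  { exists (fun _ x => exists a, f a = x). split.
    - intros _. exists f. split; [apply f_cont|]. split; [apply f_inj|]. intros x; tauto.
    - intros x. split; [intros H; now exists O | intros [_ H]; exact H]. }
  split.
  - intros d x sh Hd HM Hdist.
    assert (Ha : forall i, exists a, (i < d)%nat -> f a = x i).
    { intros i. destruct (lt_dec i d) as [Hi|Hi].
      - destruct (HM i Hi) as [a Ha]. exists a. auto.
      - exists (fun _ => false). intros; lia. }
    set (af := fun i => proj1_sig (constructive_indefinite_description _ (Ha i))).
    assert (Haf : forall i, (i < d)%nat -> f (af i) = x i).
    { intros i Hi. unfold af. destruct (constructive_indefinite_description _ (Ha i)) as [a' Ha'].
      simpl. auto. }
    destruct (list_eventually (list_prod (seq 0 d) (seq 0 d))
      (fun p L => fst p = snd p \/ bin (af (fst p)) L <> bin (af (snd p)) L)) as [L HL].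
    { intros [i j] Hp. apply in_prod_iff in Hp. destruct Hp as [Hi Hj].
      apply in_seq in Hi. apply in_seq in Hj. simpl.
      destruct (Nat.eq_dec i j) as [E|E]; [exists O; intros; now left|].
      assert (Hne : af i <> af j).
      { intros Ea. apply (Hdist i j); try lia. rewrite <- (Haf i), <- (Haf j) by lia. now rewrite Ea. }
      assert (exists m, af i m <> af j m) as [m Hm].
      { apply NNPP. intros H. apply Hne. apply functional_extensionality. intros m.
        apply NNPP. intros H'. apply H. eauto. }
      exists (S m). intros L' HL'. right. intros Eb. apply bin_inj in Eb. apply Hm. apply Eb. lia. }
    assert (Hbin : forall i j, (i < d)%nat -> (j < d)%nat -> i <> j -> bin (af i) L <> bin (af j) L).
    { intros i j Hi Hj Hij. destruct (HL L (le_n L) (i, j)) as [E|E].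
      - apply in_prod; apply in_seq; lia.
      - simpl in E. lia.
      - exact E. }
    assert (Hreq : forall (t : nat -> nat) E N, exists n, (N <= n)%nat /\ forall i, (i < d)%nat ->
       rho (Nat.iter n T (Nat.iter (sh i) T (x i))) (G (t i)) < / (INR E + 1)).
    { intros t E N.
      set (r := (L, E, N, O, map (fun i => (bin (af i) L, sh i, t i)) (seq 0 d)) : Req).
      destruct (req_often r L) as [k [Hk Hrk]].
      destruct (st_props k) as [_ [_ [_ RP]]]. unfold reqprop in RP. rewrite Hrk in RP.
      destruct (RP Hk) as [n [Hn H]]. exists n. split; [exact Hn|].
      intros i Hi. specialize (H (af i) (x i)). rewrite <- (Haf i Hi) in H |- *.
      specialize (H (f_in (S k) (af i))).
      assert (Ed : rdata r (af i) = (sh i, t i)).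
      { unfold r, rdata.
        apply (lookup_map (fun i => (bin (af i) L, sh i, t i)) (seq 0 d) i (O, O)).
        - apply in_seq. lia.
        - intros j Hj Hne. apply in_seq in Hj. simpl. apply Hbin; lia. }
      rewrite Ed in H. simpl in H. rewrite <- Nat.iter_add. exact H. }
    split.
    + intros eps He N. destruct (arch_inv (eps / 2)) as [E HE]; [lra|].
      destruct (Hreq (fun _ => O) E N) as [n [Hn H]]. exists n. split; [exact Hn|].
      intros i j Hi Hj. cbv beta. specialize (H i Hi) as H1. specialize (H j Hj) as H2.
      pose proof (rho_tri (Nat.iter n T (Nat.iter (sh i) T (x i))) (G O) (Nat.iter n T (Nat.iter (sh j) T (x j)))).
      rewrite (rho_sym (G O)) in H0. lra.
    + destruct (Hs d) as [[D1 D2] D3].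
      exists (2 * sD d). split; [lra|]. intros N.
      destruct (arch_inv (sD d / 2)) as [E HE]; [lra|].
      destruct (Hreq (sI d) E N) as [n [Hn H]]. exists n. split; [exact Hn|].
      intros i j Hi Hj Hij. cbv beta. specialize (H i Hi) as H1. specialize (H j Hj) as H2.
      specialize (D3 i j Hi Hj Hij).
      set (Yi := Nat.iter n T (Nat.iter (sh i) T (x i))) in *.
      set (Yj := Nat.iter n T (Nat.iter (sh j) T (x j))) in *.
      pose proof (rho_tri (G (sI d i)) Yi (G (sI d j))).
      pose proof (rho_tri Yi Yj (G (sI d j))).
      rewrite (rho_sym (G (sI d i)) Yi) in H0. pose proof (rho_sym (G (sI d j)) Yj). lra.
  - intros x [a Ha] y eps He N. subst x.
    destruct (G_dense y (eps / 2)) as [j Hj]; [lra|].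
    destruct (arch_inv (eps / 2)) as [E HE]; [lra|].
    set (r := (O, E, N, j, []) : Req).
    destruct (req_often r O) as [k [Hk Hrk]].
    destruct (st_props k) as [_ [_ [_ RP]]]. unfold reqprop in RP. rewrite Hrk in RP.
    destruct (RP Hk) as [n [Hn H]]. exists n. split; [exact Hn|].
    specialize (H a (f a) (f_in (S k) a)).
    change (rdata r a) with (O, j) in H. simpl in H. rewrite Nat.add_0_r in H.
    pose proof (rho_tri (Nat.iter n T (f a)) (G j) y). lra.
Qed.

End Dyn.

Theorem mainTheorem10 (X : Type) (rho : X -> X -> R) (T : X -> X)
  (Hmetric : is_metric rho) (Hcompact : compact_space rho)
  (Htwo : exists a b : X, a <> b)
  (Hcont : continuous_map rho T) (Hwm : weakly_mixing rho T) :
  exists (delta : nat -> R) (M : X -> Prop),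
    (forall d : nat, (2 <= d)%nat -> 0 < delta d < 1) /\
    mycielski_set rho M /\
    (forall (d : nat) (x : nat -> X) (s : nat -> nat),
       (2 <= d)%nat ->
       (forall i, (i < d)%nat -> M (x i)) ->
       (forall i j, (i < d)%nat -> (j < d)%nat -> i <> j -> x i <> x j) ->
       li_yorke_tuple rho T (delta d) d (fun i => Nat.iter (s i) T (x i))) /\
    (forall x, M x -> forall y, in_omega_limit rho T x y).
Proof.
  destruct Htwo as [a [b Hab]].
  eapply main_sec; eauto.
Qed.
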